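(* Let $A$ and $B$ be nonzero integers, let $g=\gcd(A,B)$, write $A=ga$, $B=gb$, and let $L$ be a positive integer such that every prime divisor of $L$ divides $g$ (i.e. $\ell=\prod_{p\nmid g}p^{\nu_p(L)}=1$). Let $\gamma(L)=\max_{p\mid g}\left\lceil \nu_p(L)/\nu_p(g)\right\rceil$ (with $\gamma(L)=0$ if $g=1$). Then $L\in G_{(A,B)}$ if and only if there exists a positive integer $K\ge\gamma(L)$. In this case $L\in G_{(A,B)}$ and every positive integer $K\ge\gamma(L)$ satisfies $L\mid(A^K+B^K)$.
   Context: For nonzero integers $x,y$, $G_{(x,y)}$ is the set of positive integers $n$ such that $n\mid(x^k+y^k)$ for some positive integer $k$. $\nu_p$ is the $p$-adic valuation; products and maxima over $p$ range over primes. *)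

(* Defs.v *)
From mathcomp Require Import all_boot all_order all_algebra.
Set Implicit Arguments. Unset Strict Implicit. Unset Printing Implicit Defensive.
Import Order.TTheory GRing.Theory Num.Theory.

Definition in_G (x y : int) (n : nat) : Prop :=
  exists k : nat, (0 < k)%N /\ (n%:Z %| (x ^+ k + y ^+ k)%R)%Z.

Definition ceil_div (m n : nat) : nat := (m + n.-1) %/ n.

Definition gammaL (g L : nat) : nat :=
  \max_(p <- primes g) ceil_div (logn p L) (logn p g).

(* Main.v *)
Require Import Defs.
From mathcomp Require Import all_boot all_order all_algebra zify.
Import Order.TTheory GRing.Theory Num.Theory.

Lemma keyL (g L K : nat) : (0 < g)%N -> (0 < L)%N ->
  (forall p : nat, prime p -> (p %| L)%N -> (p %| g)%N) ->
  (gammaL g L <= K)%N -> (L %| g ^ K)%N.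
Proof.
move=> g0 L0 hp hK; apply/dvdn_partP => // p; rewrite mem_primes => /and3P[pp _ pL].
have pg := hp p pp pL.
have lg : (0 < logn p g)%N by rewrite logn_gt0 mem_primes pp g0.
have : (ceil_div (logn p L) (logn p g) <= K)%N.
  apply: leq_trans hK; rewrite /gammaL.
  by apply: (@leq_bigmax_seq _ (primes g) xpredT (fun q => ceil_div (logn q L) (logn q g)) p) => //; rewrite mem_primes pp g0.
rewrite /ceil_div => h.
rewrite p_part pfactor_dvdn ?expn_gt0 ?g0 // lognX.
have : ((logn p L + (logn p g).-1) %/ logn p g < K.+1)%N by [].
rewrite ltn_divLR //; rewrite mulSn. lia.
Qed.

Theorem corollary3p11 (A B : int) (L : nat)
  (hA : A != 0%R) (hB : B != 0%R) (hL : (0 < L)%N)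
  (hprimes : forall p : nat, prime p -> (p %| L)%N -> (p %| `|gcdz A B|%N)%N) :
  (in_G A B L <-> exists K : nat, (0 < K)%N /\ (gammaL `|gcdz A B|%N L <= K)%N) /\
  (forall K : nat, (0 < K)%N -> (gammaL `|gcdz A B|%N L <= K)%N ->
     (L%:Z %| (A ^+ K + B ^+ K)%R)%Z).
Proof.
have g0 : (0 < `|gcdz A B|%N)%N.
  by rewrite absz_gt0 gcdz_eq0 negb_and hA.
have P2 : forall K : nat, (0 < K)%N -> (gammaL `|gcdz A B|%N L <= K)%N ->
     (L%:Z %| (A ^+ K + B ^+ K)%R)%Z.
  move=> K K0 hK.
  have h1 : (L%:Z %| ((gcdz A B) ^+ K)%R)%Z.
    by rewrite dvdzE abszX; exact: keyL.
  apply: rpredD.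
    exact: dvdz_trans h1 (dvdz_exp2r K (dvdz_gcdl A B)).
  exact: dvdz_trans h1 (dvdz_exp2r K (dvdz_gcdr A B)).
split => //; split.
  move=> _; exists (maxn 1 (gammaL `|gcdz A B|%N L)).
  by rewrite leq_maxr leq_maxl.
by case=> K [K0 hK]; exists K; split => //; apply: P2.
Qed.
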